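(* Let $(G=(V,E),k,\ell)$ be an instance of Almost Forest Deletion. Construct $(G'=(V',E'),R,k',\ell')$ as follows: start with $V'=V$, $E'=\varnothing$, $R=\varnothing$; for each edge $e=(u,v)\in E$ add a new vertex $v_e$ to $V'$ and to $R$ and add the edges $(u,v_e)$ and $(v_e,v)$ to $E'$ (i.e. subdivide $e$); set $k'=k$, $\ell'=\ell$. Then $(G',R,k',\ell')$ is an instance of Restricted Independent Almost Forest Deletion equivalent to $(G,k,\ell)$.
   Context: A graph is an $\ell$-forest if deleting at most $\ell$ of its edges yields a forest. Almost Forest Deletion: given a graph $G$ and integers $k,\ell\ge0$, decide whether there is $S\subseteq V(G)$ with $|S|\le k$ such that $G-S$ is an $\ell$-forest. Restricted Independent Almost Forest Deletion: given a graph $G$, a set $R\subseteq V(G)$ and integers $k,\ell\ge 0$, decide whether there is a set $S\subseteq V(G)\setminus R$ with $|S|\le k$ such that $S$ is an independent set in $G$ and $G-S$ is an $\ell$-forest. *)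

(* Defs.v *)
(* Finite simple graphs as symmetric irreflexive relations on a finType. *)
From mathcomp Require Import all_boot.
Set Implicit Arguments. Unset Strict Implicit. Unset Printing Implicit Defensive.

Section Graphs.
Variable T : finType.

Definition has_cycle (A : {set T}) (r : rel T) : Prop :=
  exists s : seq T, [/\ uniq s, 2 < size s, all (mem A) s & cycle r s].

Definition is_forest (A : {set T}) (r : rel T) : Prop := ~ has_cycle A r.

Definition edges_on (A : {set T}) (r : rel T) : {set {set T}} :=
  [set [set x; y] | x in A, y in A & r x y].

Definition ell_forest (A : {set T}) (r : rel T) (l : nat) : Prop :=
  exists F : {set {set T}},
    [/\ F \subset edges_on A r, #|F| <= l &
        is_forest A (fun x y => r x y && ([set x; y] \notin F))].

Definition independent (r : rel T) (S : {set T}) : Prop :=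
  forall x y, x \in S -> y \in S -> ~~ r x y.

Definition AFD (e : rel T) (k l : nat) : Prop :=
  exists S : {set T}, #|S| <= k /\ ell_forest (~: S) e l.

Definition RIAFD (e : rel T) (R : {set T}) (k l : nat) : Prop :=
  exists S : {set T},
    [/\ S \subset ~: R, #|S| <= k, independent e S & ell_forest (~: S) e l].

Definition edge_set (e : rel T) : {set {set T}} :=
  [set X : {set T} | [exists x, exists y, e x y && (X == [set x; y])]].

Definition subdiv_vertex (e : rel T) : finType :=
  (T + {X : {set T} | X \in edge_set e})%type.

Definition subdiv_rel (e : rel T) : rel (subdiv_vertex e) :=
  fun a b => match a, b with
             | inl u, inr X => u \in val X
             | inr X, inl u => u \in val X
             | _, _ => false
             end.

Definition subdiv_R (e : rel T) : {set subdiv_vertex e} :=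
  [set a | if a is inr _ then true else false].

End Graphs.

Arguments subdiv_vertex {T} e.
Arguments subdiv_rel {T} e.
Arguments subdiv_R {T} e.

(* Main.v *)
Require Import Defs.
From mathcomp Require Import all_boot.
Set Implicit Arguments. Unset Strict Implicit. Unset Printing Implicit Defensive.

Lemma edges_onP (T : finType) (A B : {set T}) (r : rel T) :
  reflect (exists x y, [/\ x \in B, y \in B, r x y & A = [set x; y]])
          (A \in edges_on B r).
Proof.
apply: (iffP imset2P).
  by case=> x y Hx; rewrite inE => /andP[Hy Hr] ->; exists x, y.
by case=> x [y [Hx Hy Hr ->]]; apply: (Imset2spec Hx) => //; rewrite inE Hy.
Qed.

Lemma set2_pair (T : finType) (u w x y : T) : u != w ->
  u \in [set x; y] -> w \in [set x; y] -> [set u; w] = [set x; y].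
Proof.
move=> Huw /set2P[]Hu /set2P[]Hw; rewrite Hu Hw in Huw *; rewrite ?eqxx // in Huw.
by rewrite setUC.
Qed.

Lemma last_in (T : eqType) (x : T) q : q != [::] -> last x q \in q.
Proof. by case: q => // a q _ /=; exact: mem_last. Qed.

Section S.
Variables (T : finType) (e : rel T).
Hypotheses (e_sym : symmetric e) (e_irr : irreflexive e).
Local Notation V := (subdiv_vertex e).
Local Notation ET := {X : {set T} | X \in edge_set e}.
Local Notation r' := (subdiv_rel e).

Lemma edge_setP (A : {set T}) :
  reflect (exists x y, e x y /\ A = [set x; y]) (A \in edge_set e).
Proof.
rewrite inE; apply: (iffP existsP) => [[x /existsP[y /andP[H /eqP ->]]]|[x [y [H ->]]]].
  by exists x, y.
by exists x; apply/existsP; exists y; rewrite H eqxx.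
Qed.

Lemma ET_pair (X : ET) u w : u != w -> u \in val X -> w \in val X ->
  val X = [set u; w] /\ e u w.
Proof.
case: X => /= A /edge_setP[x [y [Hxy ->]]] Huw Hu Hw.
have E := set2_pair Huw Hu Hw; split => //.
move: Hu Hw Huw Hxy => /set2P[]-> /set2P[]-> //; rewrite ?eqxx //.
by rewrite e_sym.
Qed.

Definition getl (a : V) : option T := if a is inl u then Some u else None.

Lemma getlK : ocancel getl (@inl T ET).
Proof. by case. Qed.


Lemma r'_ll u w : r' (inl u) (inl w) = false. Proof. by []. Qed.
Lemma r'_rr X Y : r' (inr X) (inr Y) = false. Proof. by []. Qed.
Lemma r'_lr u X : r' (inl u) (inr X) = (u \in val X). Proof. by []. Qed.
Lemma r'_rl u X : r' (inr X) (inl u) = (u \in val X). Proof. by []. Qed.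

Definition gF (A : {set T}) : {set V} :=
  match [pick x in A], (insub A : option ET) with
  | Some x, Some X => [set inl x; inr X]
  | _, _ => set0
  end.

Section Fwd.
Variables (S : {set T}) (F : {set {set T}}).

Definition rF (x y : T) := e x y && ([set x; y] \notin F).
Definition r2 (a b : V) := r' a b && ([set a; b] \notin gF @: F).
Arguments rF : simpl never.
Arguments r2 : simpl never.

Lemma r2_ll u w : r2 (inl u) (inl w) = false. Proof. by []. Qed.
Lemma r2_rr X Y : r2 (inr X) (inr Y) = false. Proof. by []. Qed.

Lemma fwd_step u w X : u != w -> r2 (inl u) (inr X) -> r2 (inr X) (inl w) -> rF u w.
Proof.
rewrite /r2 r'_lr r'_rl => Huw /andP[Hu Hn1] /andP[Hw Hn2].
have [EX Heuw] := ET_pair Huw Hu Hw.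
rewrite /rF Heuw /=; apply/negP => HF.
have: gF (val X) \in gF @: F by apply: imset_f; rewrite EX.
rewrite /gF; case: pickP => [x Hx|/(_ u)]; last by rewrite Hu.
rewrite valK; move: Hx; rewrite EX => /set2P[]->; first by rewrite (negbTE Hn1).
by rewrite setUC (negbTE Hn2).
Qed.

Lemma liftA n : forall p u z, size p <= n -> path r2 (inl u) p ->
  uniq (inl u :: p) -> last (inl u) p = inl z ->
  path rF u (pmap getl p) /\ last u (pmap getl p) = z.
Proof.
elim: n => [|n IH] [|a p] u z //=; try by move=> _ _ _ [->].
case: a => [w|X]; first by rewrite r2_ll.
case: p => [|b p]; first by move=> _ _ _ /= [].
case: b => [w|Y]; last by rewrite /= andbF.
rewrite ltnS => Hs /andP[H1 /andP[H2 Hp]].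
move=> /andP[Hnu /andP[_ Hu]] Hl.
have Huw' : u != w by apply: contra Hnu => /eqP->; rewrite !inE eqxx orbT.
have [Hp' Hl'] := IH p w z (leq_trans (leqnSn _) Hs) Hp Hu Hl.
by rewrite /= /path -/(path rF w (pmap getl p)) Hp' (fwd_step Huw' H1 H2).
Qed.


Lemma inlS x : (inl x \in ~: (@inl T ET @: S)) = (x \in ~: S).
Proof. by rewrite !inE mem_imset //; move=> a b []. Qed.

Lemma fwd_core u p : uniq (inl u :: p) -> 2 < size (inl u :: p) ->
  all (mem (~: (@inl T ET @: S))) (inl u :: p) -> cycle r2 (inl u :: p) ->
  has_cycle (~: S) rF.
Proof.
case/lastP: p => [//|q b] Hu Hs Hall.
rewrite /= !rcons_path last_rcons => /andP[/andP[Hq Hqb] Hb].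
case: b Hu Hs Hall Hqb Hb => [w|Xn] Hu Hs Hall Hqb Hb; first by rewrite r2_ll in Hb.
case Hc: (last (inl u) q) Hqb => [un|Y] Hqb; last by rewrite r2_rr in Hqb.
move: (Hu); rewrite -rcons_cons rcons_uniq => /andP[HXn Huq].
have [Hpq Hlq] := liftA (leqnn (size q)) Hq Huq Hc.
have Hq0 : q != [::] by move: Hs; case: q {Hq Huq HXn Hc Hpq Hlq Hall Hu}.
have Hneq : un != u.
  apply: contraTneq (last_in (inl u) Hq0) => E.
  by rewrite Hc E; move: Huq => /andP[].
have Hcyc : cycle rF (u :: pmap getl q).
  by rewrite /= rcons_path Hpq Hlq (fwd_step Hneq Hqb Hb).
have Huniq : uniq (u :: pmap getl q) by exact: (pmap_uniq getlK Huq).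
have Hall' : all (mem (~: S)) (u :: pmap getl q).
  suff H : forall x, x \in u :: pmap getl q -> x \in ~: S by apply/allP.
  move=> x; rewrite inE => /orP[/eqP->|].
    by rewrite -inlS; move: Hall => /andP[].
  rewrite mem_pmap => /mapP[[a|a] Ha //= [->]].
  rewrite -[_ \in _]inlS; apply: (allP Hall); rewrite inE mem_rcons inE Ha.
  by rewrite !orbT.
exists (u :: pmap getl q); split => //.
case: q Hq Hc Hq0 Hpq Hlq Huq HXn Hu Hs Hall Hneq Hcyc Huniq Hall' => [//|a q].
case: a => [w|X1]; first by move=> /=; case.
case: q => [|b q2]; first by rewrite /=.
case: b => [u2|Y]; last by move=> /=; rewrite andbF; case.
move=> Hq Hc _ _ _ Huq HXn _ _ _ _ _ _ _.
case: q2 Hq Hc Huq HXn => [|c q2] Hq Hc Huq HXn.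
  move: Hc Hq => /= [Eu] /andP[H1 /andP[H2 _]]; subst un.
  have Hu2 : u != u2 by move: Huq; rewrite /= !inE negb_or => /andP[/andP[_ ]].
  move: H1 H2 Hqb Hb; rewrite /r2 !r'_lr !r'_rl => /andP[H1 _] /andP[H2 _] /andP[H3 _] /andP[H4 _].
  have [E1 _] := ET_pair Hu2 H1 H2.
  have [E2 _] := ET_pair Hu2 H4 H3.
  have E : X1 = Xn by apply: val_inj; rewrite E1 E2.
  by move: HXn; rewrite E !inE eqxx orbT.
have : un \in pmap getl (c :: q2).
  rewrite mem_pmap; apply: (map_f getl (x := inl un)).
  by rewrite /= in Hc; rewrite -Hc; exact: mem_last.
by rewrite /=; case: (oapp _ _ _).
Qed.


Lemma fwd_cyc : has_cycle (~: (@inl T ET @: S)) r2 -> has_cycle (~: S) rF.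
Proof.
case=> -[|a p] [Hu Hs Hall Hc] //.
case: a Hu Hs Hall Hc => [u|X] Hu Hs Hall Hc; first exact: (fwd_core Hu).
case: p Hu Hs Hall Hc => [//|b p] Hu Hs Hall Hc.
case: b Hu Hs Hall Hc => [w|Y] Hu Hs Hall Hc; last by move: Hc => /=; case.
have E : rot 1 (inr X :: inl w :: p) = inl w :: rcons p (inr X) by rewrite rot1_cons.
apply: (fwd_core (u := w) (p := rcons p (inr X))).
- by rewrite -E rot_uniq.
- by rewrite -E size_rot.
- by rewrite -E (eq_all_r (mem_rot 1 _)).
- by rewrite -E rot_cycle.
Qed.

End Fwd.
End S.

Section Dirs.
Variables (T : finType) (e : rel T).
Hypotheses (e_sym : symmetric e) (e_irr : irreflexive e).
Local Notation V := (subdiv_vertex e).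
Local Notation ET := {X : {set T} | X \in edge_set e}.
Local Notation r' := (subdiv_rel e).

Lemma fwd_dir k l : AFD e k l -> RIAFD r' (subdiv_R e) k l.
Proof.
case=> S [HS [F [HFsub HFl Hfor]]].
exists (@inl T ET @: S); split.
- by apply/subsetP => x /imsetP[u _ ->]; rewrite !inE.
- by rewrite card_imset //; move=> a b [].
- by move=> x y /imsetP[u _ ->] /imsetP[w _ ->].
exists (gF e @: F); split.
- apply/subsetP => B /imsetP[A HA ->].
  move: (subsetP HFsub A HA) => /edges_onP[x [y [Hx Hy Hxy EA]]].
  rewrite /gF; case: pickP => [z Hz|/(_ x)]; last by rewrite EA !inE eqxx.
  case: insubP => [X _ HXv|Hn]; last first.
    by case/negP: Hn; apply/edge_setP; exists x, y.
  apply/edges_onP; exists (inl z), (inr X); split => //.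
  + rewrite inlS; move: Hz; rewrite EA => /set2P[]-> //.
  + by rewrite inE; apply/imsetP => -[u _].
  + by rewrite r'_lr HXv.
- exact: leq_trans (leq_imset_card _ _) HFl.
- by move=> Hc; apply: Hfor; exact: (fwd_cyc e_sym Hc).
Qed.


Definition lstep (a b : T) : seq V :=
  if (insub [set a; b] : option ET) is Some X then [:: inr X; inl b] else [:: inl b].

Fixpoint lift (a : T) (p : seq T) : seq V :=
  if p is b :: p' then lstep a b ++ lift b p' else [::].

Lemma lstep_last a b : last (inl a) (lstep a b) = inl b.
Proof. by rewrite /lstep; case: insubP. Qed.

Lemma lstep_inl a b x : (inl x \in lstep a b) = (x == b).
Proof. by rewrite /lstep; case: insubP => *; rewrite !inE. Qed.

Lemma lstep_inr a b Y : inr Y \in lstep a b -> val Y = [set a; b].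
Proof.
rewrite /lstep; case: insubP => [X _ HXv|_]; rewrite !inE.
  by case/orP => /eqP // [->].
by move/eqP.
Qed.

Lemma lift_rcons a p b : lift a (rcons p b) = lift a p ++ lstep (last a p) b.
Proof. by elim: p a => [|c p IH] a /=; rewrite ?cats0 // IH catA. Qed.

Lemma lift_inl a p x : (inl x \in lift a p) = (x \in p).
Proof. elim: p a => [|b p IH] a //=; by rewrite mem_cat IH lstep_inl in_cons. Qed.

Lemma lift_inr a p Y : inr Y \in lift a p -> forall x, x \in val Y -> x \in a :: p.
Proof.
elim: p a => [|b p IH] a //=; rewrite mem_cat => /orP[/lstep_inr ->|/IH H] x.
  by case/set2P => ->; rewrite !inE eqxx ?orbT.
by move/H => Hx; rewrite in_cons Hx orbT.
Qed.

Lemma lift_uniq a p : uniq (a :: p) -> uniq (inl a :: lift a p).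
Proof.
elim: p a => [|b p IH] a //= /andP[Ha Hu].
move: Ha; rewrite in_cons negb_or => /andP[Hab Hap].
have Hlab : inl a != inl b :> V by apply/eqP => -[] E; move/eqP: Hab.
have := IH b Hu; rewrite /lstep; case: insubP => [X _ HXv|_] /= /andP[H1 H2].
  rewrite H1 H2 !andbT !inE /= lift_inl negb_or Hap Hlab /=.
  apply/negP => /lift_inr /(_ a); rewrite HXv set21 => /(_ isT).
  by rewrite in_cons (negbTE Hab) (negbTE Hap).
by rewrite H1 H2 andbT in_cons lift_inl negb_or Hap Hlab.
Qed.

Section Bwd.
Variables (S' : {set V}) (F' : {set {set V}}).

Definition Sb := [set u | @inl T ET u \in S'].
Definition Fb := [set A in edges_on (~: Sb) e |
  [exists X : ET, (val X == A) && [exists u, [set inl u; inr X] \in F']]].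
Definition rb (x y : T) := e x y && ([set x; y] \notin Fb).
Definition r3 (a b : V) := r' a b && ([set a; b] \notin F').
Arguments rb : simpl never.
Arguments r3 : simpl never.

Lemma bstep a b X : rb a b -> a \in ~: Sb -> b \in ~: Sb -> val X = [set a; b] ->
  r3 (inl a) (inr X) && r3 (inr X) (inl b).
Proof.
move=> /andP[Hab HF] Ha Hb HX.
rewrite /r3 r'_lr r'_rl HX !inE !eqxx orbT /=.
have HE : [set a; b] \in edges_on (~: Sb) e by apply/edges_onP; exists a, b.
apply/andP; split; apply/negP => H; case/negP: HF; rewrite inE HE /=;
  apply/existsP; exists X; rewrite HX eqxx /=; apply/existsP.
  by exists a.
by exists b; rewrite setUC.
Qed.

Lemma lift_path a p : path rb a p -> all (mem (~: Sb)) (a :: p) ->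
  path r3 (inl a) (lift a p).
Proof.
elim: p a => [|b p IH] a //= /andP[Hab Hp] /andP[Ha /andP[Hb Hall]].
rewrite /lstep; case: insubP => [X _ HXv|Hn]; last first.
  by case/negP: Hn; apply/edge_setP; exists a, b; case/andP: Hab.
have := bstep Hab Ha Hb HXv => /andP[H1 H2].
by rewrite /= H1 H2 IH //= Hb.
Qed.

Hypothesis HR : S' \subset ~: subdiv_R e.

Lemma inS'_l x : x \in ~: Sb -> inl x \in ~: S'.
Proof. by rewrite !inE. Qed.

Lemma inS'_r Y : inr Y \in ~: S'.
Proof. by rewrite inE; apply/negP => /(subsetP HR); rewrite !inE. Qed.

Lemma bwd_cyc : has_cycle (~: Sb) rb -> has_cycle (~: S') r3.
Proof.
case=> -[|u p] [Hu Hs Hall Hc] //.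
move: (Hc) => /= Hc'.
have Hall2 : all (mem (~: Sb)) (u :: rcons p u).
  by rewrite -rcons_cons all_rcons Hall andbT; case/andP: Hall.
have := lift_path Hc' Hall2; rewrite lift_rcons.
move: Hc'; rewrite rcons_path => /andP[Hp Hl].
rewrite /lstep; case: insubP => [Xl _ HXl|Hn]; last first.
  by case/negP: Hn; apply/edge_setP; exists (last u p), u; case/andP: Hl.
move=> Hlp.
have Hp0 : p != [::] by case: p {Hu Hall Hc Hall2 Hp Hl HXl Hlp} Hs.
exists (inl u :: rcons (lift u p) (inr Xl)); split.
- rewrite -rcons_cons rcons_uniq lift_uniq // andbT inE /=.
  case: p Hu Hs Hall Hc Hall2 Hp Hl HXl Hlp Hp0 => [//|w p'] Hu Hs _ _ _ Hp _ HXl _ _.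
  rewrite /= mem_cat; apply/negP => /orP[].
    move=> /lstep_inr; rewrite HXl => E.
    have : last w p' \in [set u; w] by rewrite -E set21.
    case/set2P => El.
      by move: Hu => /= /andP[+ _]; rewrite -{1}El mem_last.
    case: p' Hs Hu El {Hp HXl E} => [//|c p'] _ /= /andP[_ /andP[Hw _]] El.
    by move: Hw; rewrite -{1}El mem_last.
  move=> /lift_inr /(_ u); rewrite HXl set22 => /(_ isT) Hin.
  by move: Hu; rewrite /= Hin.
- case: p Hp0 {Hu Hs Hall Hc Hall2 Hp Hl HXl Hlp} => [//|w p'] _.
  by rewrite [size _]/= size_rcons size_cat /lstep; case: insubP.
- suff H : forall x, x \in inl u :: rcons (lift u p) (inr Xl) -> x \in ~: S'
    by apply/allP.
  move=> x; rewrite inE mem_rcons inE => /or3P[/eqP->|/eqP->|].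
  + by apply: inS'_l; case/andP: Hall.
  + exact: inS'_r.
  + case: x => [x|Y] H; last exact: inS'_r.
    apply: inS'_l; rewrite lift_inl in H; move/allP: Hall; apply.
    by rewrite inE H orbT.
- by rewrite /= -!cats1 -catA.
Qed.

End Bwd.

Definition hF (B : {set V}) : {set T} :=
  if [pick X : ET | inr X \in B] is Some X then val X else set0.

Lemma hF_pair u X : hF [set inl u; inr X] = val X.
Proof.
rewrite /hF; case: pickP => [X' HX'|/(_ X)]; last by rewrite !inE eqxx orbT.
by move: HX'; rewrite !inE => /orP[/eqP //|/eqP [->]].
Qed.

Lemma bwd_dir k l : RIAFD r' (subdiv_R e) k l -> AFD e k l.
Proof.
case=> S' [HR HS' Hind [F' [HF'sub HF'l Hfor]]].
exists (Sb S'); split.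
  apply: leq_trans HS'.
  rewrite -(card_imset _ (fun a b (H : @inl T ET a = inl b) => let: erefl := H in erefl)).
  apply: subset_leq_card; apply/subsetP => x /imsetP[u Hu ->].
  by rewrite inE in Hu.
exists (Fb S' F'); split.
- by apply/subsetP => A; rewrite inE => /andP[].
- apply: leq_trans HF'l; apply: leq_trans (leq_imset_card hF F').
  apply: subset_leq_card; apply/subsetP => A; rewrite inE => /andP[_].
  case/existsP => X /andP[/eqP <- /existsP[u Hu]].
  by apply/imsetP; exists [set inl u; inr X] => //; rewrite hF_pair.
- by move=> Hc; apply: Hfor; exact: (bwd_cyc HR Hc).
Qed.

End Dirs.

Theorem lemma12 (T : finType) (e : rel T) (e_sym : symmetric e) (e_irr : irreflexive e)
    (k l : nat) :
  [/\ symmetric (subdiv_rel e), irreflexive (subdiv_rel e) &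
      (AFD e k l <-> RIAFD (subdiv_rel e) (subdiv_R e) k l)].
Proof.
split.
- by move=> [a|X] [b|Y].
- by move=> [a|X].
- split; [exact: fwd_dir | exact: bwd_dir].
Qed.
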